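(* Let $n_1,n_2,n_3$ be integers and $\ell$ a positive integer with $n_1^2+n_2^2+n_3^2=\ell^2$. If $P=(x,y,z)\in\mathbb{Z}^3$ satisfies $n_1x+n_2y+n_3z=0$, then $x^2+y^2+z^2$ is a sum of two squares of integers. *)

(* Defs.v *)
From Stdlib Require Import ZArith.

(* Main.v *)
Require Import Defs.
From Stdlib Require Import ZArith Lia.
Open Scope Z_scope.

Lemma near (a d : Z) : 0 < d -> exists q r, a = d * q + r /\ -d <= 2 * r <= d.
Proof.
  intros Hd. exists ((2 * a + d) / (2 * d)), (a - d * ((2 * a + d) / (2 * d))).
  pose proof (Z.div_mod (2*a+d) (2*d) ltac:(lia)).
  pose proof (Z.mod_pos_bound (2*a+d) (2*d) ltac:(lia)).
  lia.
Qed.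

Lemma sq_bound (r d : Z) : -d <= 2 * r <= d -> 4 * r ^ 2 <= d ^ 2.
Proof.
  intros H. assert (Z.abs (2 * r) <= d) by lia.
  assert (0 <= Z.abs (2*r)) by lia.
  assert (Z.abs (2*r) * Z.abs (2*r) <= d * d) by (apply Z.mul_le_mono_nonneg; lia).
  rewrite <- Z.abs_mul in H2. rewrite Z.abs_eq in H2 by nia. nia.
Qed.

Lemma dc_aux (m : nat) : forall d N a b, 0 < d -> d <= Z.of_nat m ->
  a ^ 2 + b ^ 2 = N * d ^ 2 -> exists u v, N = u ^ 2 + v ^ 2.
Proof.
  induction m as [|m IH]; intros d N a b Hd Hm H; [lia|].
  destruct (near a d Hd) as [q1 [r1 [Ha Hq1]]].
  destruct (near b d Hd) as [q2 [r2 [Hb Hq2]]].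
  subst a b.
  pose (d' := d * N - 2 * (q1 * r1 + q2 * r2) - d * (q1 ^ 2 + q2 ^ 2)).
  assert (E2 : d * d' = r1 ^ 2 + r2 ^ 2).
  { transitivity (N*d^2 - ((d*q1+r1)^2+(d*q2+r2)^2) + r1^2+r2^2);
      [unfold d'; ring | rewrite <- H; ring]. }
  clearbody d'.
  pose proof (sq_bound _ _ Hq1). pose proof (sq_bound _ _ Hq2).
  assert (Hsq : d * d' < d * d) by nia.
  assert (Hd0 : 0 <= d').
  { destruct (Z.lt_ge_cases d' 0); [|lia].
    assert (d * d' < 0) by (apply Z.mul_pos_neg; lia). nia. }
  assert (Hdd : d' < d) by (apply (Z.mul_lt_mono_pos_l d); lia).
  destruct (Z.eq_dec d' 0) as [Z0|NZ].
  - exists q1, q2. subst d'.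
    assert (r1 = 0) by nia. assert (r2 = 0) by nia. subst r1 r2.
    apply (Z.mul_reg_r _ _ (d ^ 2)); [nia|]. rewrite <- H. ring.
  - pose (K := q1 ^ 2 + q2 ^ 2 - N).
    assert (E1 : 2 * (q1 * r1 + q2 * r2) = - K * d - d').
    { unfold K. apply (Z.mul_reg_l _ _ d); [lia|].
      transitivity (- d^2*(q1^2+q2^2) + ((d*q1+r1)^2+(d*q2+r2)^2) - (r1^2+r2^2));
      [ring | rewrite H, <- E2; ring]. }
    assert (HN : N = q1 ^ 2 + q2 ^ 2 - K) by (unfold K; ring).
    clearbody K.
    apply (IH d' N (d' * q1 + K * r1) (d' * q2 + K * r2)); [lia|lia|].
    rewrite HN.
    transitivity (d' ^ 2 * (q1 ^ 2 + q2 ^ 2) + d' * K * (2 * (q1 * r1 + q2 * r2))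
                  + K ^ 2 * (r1 ^ 2 + r2 ^ 2)); [ring|].
    rewrite E1, <- E2. ring.
Qed.

Theorem corollary2p6 (n1 n2 n3 l x y z : Z) :
  0 < l ->
  n1 ^ 2 + n2 ^ 2 + n3 ^ 2 = l ^ 2 ->
  n1 * x + n2 * y + n3 * z = 0 ->
  exists a b : Z, x ^ 2 + y ^ 2 + z ^ 2 = a ^ 2 + b ^ 2.
Proof.
  intros Hl Hn Hp.
  assert (n3 <= l) by nia.
  destruct (Z.eq_dec n3 l) as [E|NE].
  - subst n3. assert (n1 = 0) by nia. assert (n2 = 0) by nia. subst.
    assert (z = 0) by nia. subst. exists x, y. ring.
  - set (d := l - n3).
    apply (dc_aux (Z.to_nat d) d _ (d * x + z * n1) (d * y + z * n2)); [lia|lia|].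
    assert (H0 : n1 * x + n2 * y = - n3 * z) by lia.
    assert (H1 : n1 ^ 2 + n2 ^ 2 = l ^ 2 - n3 ^ 2) by lia.
    transitivity (d ^ 2 * (x ^ 2 + y ^ 2) + 2 * d * z * (n1 * x + n2 * y)
                  + z ^ 2 * (n1 ^ 2 + n2 ^ 2)); [ring|].
    rewrite H0, H1. unfold d. ring.
Qed.
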